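(* Let $K\ge 2$, let $(n_1,\dots,n_K)$ be positive integers, and let $i,j\in\{1,\dots,K\}$ be indices with $n_i<n_j$. Let $\tau$ be the time of the first emptying event and let $p\in\{1,\dots,K\}$ be the (random) type that is emptied at time $\tau$. Then for every $t$, \[ \Pr[p=i \text{ and } \tau\le t]\ \ge\ \Pr[p=j \text{ and } \tau\le t]. \]
   Context: Initial stocks $\vec n^{(0)}=(n_1,\dots,n_K)$ of $K$ goodie types evolve as follows: at each step $t=1,2,\dots$, as long as at least two coordinates of $\vec n^{(t-1)}$ are nonzero, an index $i$ is chosen uniformly at random (independently of the past) among the indices with $n_i^{(t-1)}>0$, and $\vec n^{(t)}=\vec n^{(t-1)}-\vec e_i$ ($\vec e_i$ the $i$-th standard unit vector). The time of the first emptying event is $\tau=\min\{t : \exists i \text{ with } n_i^{(t)}=0 \text{ and } n_i^{(0)}>0\}$; exactly one type is emptied at that step, and $p$ denotes that type. *)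

(* Defs.v *)
From mathcomp Require Import all_boot all_order all_algebra.
Set Implicit Arguments. Unset Strict Implicit. Unset Printing Implicit Defensive.
Import Order.TTheory GRing.Theory Num.Theory.
Local Open Scope ring_scope.

Definition pos_idx (K : nat) (n : {ffun 'I_K -> nat}) : {set 'I_K} :=
  [set k | (0 < n k)%N].

Definition dec (K : nat) (n : {ffun 'I_K -> nat}) (k : 'I_K) : {ffun 'I_K -> nat} :=
  [ffun l => if l == k then (n l).-1 else n l].

(* first_empty_prob t n i = Pr[p = i and tau <= t] for the process started
   from the stock vector n, all of whose coordinates are assumed positive
   (so that an emptying event is exactly a coordinate dropping to 0). *)
Fixpoint first_empty_prob (K : nat) (t : nat) (n : {ffun 'I_K -> nat}) (i : 'I_K)
  : rat :=
  match t with
  | 0 => 0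
  | t'.+1 =>
      if (#|pos_idx n| < 2)%N then 0 else
      \sum_(k in pos_idx n)
        (#|pos_idx n|%:R)^-1 *
        (if n k == 1%N then (k == i)%:R else first_empty_prob t' (dec n k) i)
  end.

(* Main.v *)
Require Import Defs.
From mathcomp Require Import all_boot all_order all_algebra.
From mathcomp Require Import perm.
From mathcomp Require Import zify.
Import Order.TTheory GRing.Theory Num.Theory.
Local Open Scope ring_scope.

Lemma fep_perm (K : nat) (s : {perm 'I_K}) (t : nat) :
  forall (n : {ffun 'I_K -> nat}) (x : 'I_K),
  first_empty_prob t [ffun k => n (s k)] x = first_empty_prob t n (s x).
Proof.
elim: t => [//|t IH] n x /=.
have Pm : pos_idx [ffun k => n (s k)] = s @^-1: pos_idx n.
  by apply/setP => k; rewrite !inE ffunE.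
have Cm : #|pos_idx [ffun k => n (s k)]| = #|pos_idx n|.
  by rewrite Pm (card_preimset (pos_idx n) (@perm_inj _ s)).
rewrite Cm; case: ifP => // _.
rewrite [RHS](reindex_inj (@perm_inj _ s)) /=.
apply: eq_big => k; first by rewrite Pm inE.
move=> _; rewrite ffunE (inj_eq (@perm_inj _ s)); congr (_ * _).
case: ifP => // _.
rewrite -IH; congr first_empty_prob; apply/ffunP => l.
by rewrite !ffunE (inj_eq (@perm_inj _ s)).
Qed.

Lemma fep_eq (K : nat) (t : nat) (n : {ffun 'I_K -> nat}) (i j : 'I_K) :
  n i = n j -> first_empty_prob t n j = first_empty_prob t n i.
Proof.
move=> Hij.
have E : n = [ffun k => n (tperm i j k)].
  apply/ffunP => k; rewrite ffunE.
  by case: (tpermP i j k) => [->|->|//].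
by rewrite {1}E (fep_perm _ (tperm i j) t n j) tpermR.
Qed.

Lemma fep_mono (K : nat) (t : nat) :
  forall (n : {ffun 'I_K -> nat}) (i j : 'I_K),
  (forall k : 'I_K, (0 < n k)%N) ->
  (n i <= n j)%N -> first_empty_prob t n j <= first_empty_prob t n i.
Proof.
elim: t => [//|t IH] n i j Hpos Hle.
case: (ltngtP (n i) (n j)) Hle => // [Hlt _|Heq _]; last by rewrite (@fep_eq K t.+1 n i j Heq).
rewrite /=; case: ifP => // _.
apply: ler_sum => k _; apply: ler_wpM2l; first by rewrite invr_ge0 ler0n.
case: eqP => Hk.
  case: (k =P j) => [Ekj|_]; last by rewrite /= ler0n.
  have := Hpos i; rewrite -Ekj in Hlt; lia.
apply: IH.
  move=> l; rewrite ffunE; have := Hpos l; have := Hpos k.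
  case: eqP => [E|_]; subst; lia.
rewrite !ffunE; have := Hpos k.
case: eqP => [E|_]; case: eqP => [E2|_]; subst; lia.
Qed.

Theorem lemma9 (K : nat) (n : {ffun 'I_K -> nat}) (i j : 'I_K) :
  (2 <= K)%N ->
  (forall k : 'I_K, (0 < n k)%N) ->
  (n i < n j)%N ->
  forall t : nat, first_empty_prob t n j <= first_empty_prob t n i.
Proof.
move=> _ Hpos Hlt t; apply: fep_mono => //; exact: ltnW.
Qed.
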